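(* In the setting below, for any integers $1\le i_1<\cdots<i_k\le n$ (with $1\le k\le n$), $$\mathrm{grp}(S\cap F_{i_1}\cap\cdots\cap F_{i_k}\cap F_\sigma)=\mathrm{grp}(S)\cap H_{i_1}\cap\cdots\cap H_{i_k}\cap H_\sigma.$$
   Context: Let $K$ be a field, $n\ge1$, $\lambda=(\lambda_1,\ldots,\lambda_n)$ positive integers, $L=\mathrm{lcm}(\lambda_1,\ldots,\lambda_n)$, $\omega_i=L/\lambda_i$, $\omega=(\omega_1,\ldots,\omega_n)$. Let $S\subseteq\mathbb{N}^{n+1}$ be the semigroup generated by $(\mathbf{e}_i,0)$ ($i=1,\ldots,n$) and $(\beta,1)$ for all $\beta\in\mathbb{N}^n$ with $\omega\cdot\beta\ge L$ (this is the semigroup with $K[S]\cong R[It]$, the Rees algebra of the integral closure $I$ of $(x_1^{\lambda_1},\ldots,x_n^{\lambda_n})$ in $R=K[x_1,\ldots,x_n]$); $\mathrm{grp}(S)=\mathbb{Z}^{n+1}$. $\mathrm{pos}(S)$ is the cone of nonnegative real combinations of elements of $S$. $H_i$ is the $i$-th coordinate hyperplane of $\mathbb{R}^{n+1}$, $F_i=\mathrm{pos}(S)\cap H_i$, $H_\sigma=\{\sigma=0\}$ with $\sigma(\alpha,a_{n+1})=\omega\cdot\alpha-La_{n+1}$, and $F_\sigma=\mathrm{pos}(S)\cap H_\sigma$. *)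

(* Defs.v *)
From HB Require Import structures.
From mathcomp Require Import all_boot all_order all_algebra.
Unset Printing Implicit Defensive.
Import Order.TTheory GRing.Theory Num.Theory.
Local Open Scope ring_scope.

(* Vectors of Z^{n+1} (resp. R^{n+1}) are row vectors 'rV_(n.+1).
   Coordinates 1..n of the paper are indices 0..n-1 (via widen_ord),
   coordinate n+1 of the paper is ord_max. *)

Definition cx {n : nat} (i : 'I_n) : 'I_n.+1 := widen_ord (leqnSn n) i.

Definition Lcm {n : nat} (lam : 'I_n -> nat) : nat := (\big[lcmn/1%N]_(i < n) lam i)%N.
Definition omega {n : nat} (lam : 'I_n -> nat) (i : 'I_n) : nat := (Lcm lam %/ lam i)%N.

Definition sigma {R : nzRingType} {n : nat} (lam : 'I_n -> nat) (x : 'rV[R]_(n.+1)) : R :=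
  \sum_(i < n) (omega lam i)%:R * x 0 (cx i) - (Lcm lam)%:R * x 0 ord_max.

Definition gen {n : nat} (lam : 'I_n -> nat) (v : 'rV[int]_(n.+1)) : Prop :=
  (exists i : 'I_n, v = delta_mx 0 (cx i))
  \/ ((forall j : 'I_n, 0 <= v 0 (cx j)) /\ v 0 ord_max = 1 /\
      ((Lcm lam)%:R <= \sum_(i < n) (omega lam i)%:R * v 0 (cx i) :> int)).

Definition S {n : nat} (lam : 'I_n -> nat) (v : 'rV[int]_(n.+1)) : Prop :=
  exists s : seq 'rV[int]_(n.+1), (forall g, g \in s -> gen lam g) /\ v = \sum_(g <- s) g.

Definition grp {n : nat} (A : 'rV[int]_(n.+1) -> Prop) (v : 'rV[int]_(n.+1)) : Prop :=
  exists s : seq (int * 'rV[int]_(n.+1)),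
    (forall p, p \in s -> A p.2) /\ v = \sum_(p <- s) (p.2 *~ p.1).

Definition embR (R : realFieldType) {n : nat} (v : 'rV[int]_(n.+1)) : 'rV[R]_(n.+1) :=
  map_mx (fun z : int => z%:~R) v.

Definition pos (R : realFieldType) {n : nat} (lam : 'I_n -> nat) (x : 'rV[R]_(n.+1)) : Prop :=
  exists s : seq (R * 'rV[int]_(n.+1)),
    (forall p, p \in s -> 0 <= p.1 /\ S lam p.2) /\
    x = \sum_(p <- s) (p.1 *: embR R p.2).

Definition H {R : nzRingType} {n : nat} (j : 'I_n.+1) (x : 'rV[R]_(n.+1)) : Prop := x 0 j = 0.
Definition Hsigma {R : nzRingType} {n : nat} (lam : 'I_n -> nat) (x : 'rV[R]_(n.+1)) : Prop :=
  sigma lam x = 0.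

Definition F (R : realFieldType) {n : nat} (lam : 'I_n -> nat) (j : 'I_n.+1)
  (x : 'rV[R]_(n.+1)) : Prop := pos R lam x /\ @H R n j x.
Definition Fsigma (R : realFieldType) {n : nat} (lam : 'I_n -> nat)
  (x : 'rV[R]_(n.+1)) : Prop := pos R lam x /\ Hsigma lam x.

(* Main.v *)
Require Import Defs.
From HB Require Import structures.
From mathcomp Require Import all_boot all_order all_algebra.
Import Order.TTheory GRing.Theory Num.Theory.
Local Open Scope ring_scope.
Set Warnings "-notation-overridden,-ambiguous-paths".
Set Implicit Arguments. Unset Strict Implicit.
Lemma grp0 n (A : 'rV[int]_(n.+1) -> Prop) : grp A 0.
Proof. by exists [::]; split => //; rewrite big_nil. Qed.

Lemma grpD n (A : 'rV[int]_(n.+1) -> Prop) u w : grp A u -> grp A w -> grp A (u + w).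
Proof.
move=> [s [hs ->]] [t [ht ->]]; exists (s ++ t); split; last by rewrite big_cat.
by move=> p; rewrite mem_cat => /orP [/hs|/ht].
Qed.

Lemma grpZ n (A : 'rV[int]_(n.+1) -> Prop) u (z : int) : grp A u -> grp A (z *: u).
Proof.
move=> [s [hs ->]]; exists [seq (p.1 * z, p.2) | p <- s]; split.
  by move=> p /mapP [q /hs hq ->].
rewrite big_map scaler_sumr; apply: eq_bigr => p _ /=.
by rewrite -scaler_int intz -[in RHS]scaler_int intz scalerA mulrC.
Qed.

Lemma grpN n (A : 'rV[int]_(n.+1) -> Prop) u : grp A u -> grp A (- u).
Proof. by move=> h; rewrite -scaleN1r; apply: grpZ. Qed.

Lemma grpB n (A : 'rV[int]_(n.+1) -> Prop) u w : grp A u -> grp A w -> grp A (u - w).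
Proof. by move=> hu hw; apply: grpD => //; apply: grpN. Qed.

Lemma grp_gen n (A : 'rV[int]_(n.+1) -> Prop) u : A u -> grp A u.
Proof.
move=> h; exists [:: (1, u)]; split; first by move=> p; rewrite inE => /eqP ->.
by rewrite big_cons big_nil addr0 mulr1z.
Qed.

Lemma sigmaD (Rr : nzRingType) n lam (x y : 'rV[Rr]_(n.+1)) :
  sigma lam (x + y) = sigma lam x + sigma lam y.
Proof.
rewrite /sigma !mxE mulrDr.
under eq_bigr => i _ do rewrite mxE mulrDr.
rewrite big_split /=.
set a := \sum_(i<n) _; set b := \sum_(i<n) _.
set c := _ * x _ _; set d := _ * y _ _.
by rewrite opprD addrACA.
Qed.

Lemma sigmaZ n lam (z : int) (x : 'rV[int]_(n.+1)) : sigma lam (z *: x) = z * sigma lam x.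
Proof.
rewrite /sigma mulrBr mulr_sumr !mxE; congr (_ - _); last by rewrite mulrCA.
by apply: eq_bigr => i _; rewrite mxE mulrCA.
Qed.

Lemma sigma0 (Rr : nzRingType) n lam : sigma lam (0 : 'rV[Rr]_(n.+1)) = 0.
Proof.
by rewrite /sigma big1 ?mxE ?mulr0 ?subr0 // => i _; rewrite mxE mulr0.
Qed.

Lemma sigma_sum n lam (s : seq (int * 'rV[int]_(n.+1))) :
  sigma lam (\sum_(p <- s) p.2 *~ p.1) = \sum_(p <- s) p.1 * sigma lam p.2.
Proof.
elim: s => [|p s IH]; first by rewrite !big_nil sigma0.
by rewrite !big_cons sigmaD IH -scaler_int intz sigmaZ.
Qed.

Lemma embR_coord (R : realFieldType) n (w : 'rV[int]_(n.+1)) j : embR R w 0 j = (w 0 j)%:~R.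
Proof. by rewrite mxE. Qed.

Lemma sigma_embR (R : realFieldType) n lam (w : 'rV[int]_(n.+1)) :
  sigma lam (embR R w) = (sigma lam w)%:~R.
Proof.
rewrite /sigma rmorphB rmorph_sum /= embR_coord rmorphM rmorph_nat; congr (_ - _).
by apply: eq_bigr => i _; rewrite embR_coord rmorphM rmorph_nat.
Qed.
Lemma cx_eq n (i j : 'I_n) : (cx i == cx j) = (i == j).
Proof. by apply/eqP/eqP => [/(congr1 val) /= h|->]; [apply: val_inj|]. Qed.

Lemma cx_max n (i : 'I_n) : (cx i == ord_max) = false.
Proof. by apply/negbTE; rewrite -val_eqE /= neq_ltn ltn_ord. Qed.

Lemma ord_split n (i : 'I_n.+1) : i = ord_max \/ exists j : 'I_n, i = cx j.
Proof.
case: (ltnP i n) => h.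
    by right; exists (Ordinal h); apply: val_inj.

left; apply: val_inj => /=; apply/eqP; rewrite eqn_leq h andbT -ltnS ltn_ord //.
Qed.

Lemma sum_ind n (f : 'I_n -> int) j : \sum_(i < n) f i * (i == j)%:R = f j.
Proof.
rewrite (bigD1 j) //= eqxx mulr1 big1 ?addr0 // => i /negbTE ->; by rewrite mulr0.
Qed.

Lemma lam_dvd_L n (lam : 'I_n -> nat) i : (lam i %| Lcm lam)%N.
Proof. by rewrite /Lcm (biglcmn_sup i). Qed.

Lemma omega_lam n (lam : 'I_n -> nat) i : (omega lam i * lam i)%N = Lcm lam.
Proof. by rewrite /omega divnK // lam_dvd_L. Qed.

Lemma L_gt0 n (lam : 'I_n -> nat) : (forall i, 0 < lam i)%N -> (0 < Lcm lam)%N.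
Proof.
move=> h; rewrite /Lcm; elim/big_ind: _ => // x y hx hy.
by rewrite lcmn_gt0 hx hy.
Qed.

Lemma rv_eq0 n (v : 'rV[int]_(n.+1)) :
  v 0 ord_max = 0 -> (forall j, v 0 (cx j) = 0) -> v = 0.
Proof.
move=> h1 h2; apply/rowP => i; rewrite mxE.
by have [e|[j e]] := ord_split i; rewrite e.
Qed.
Definition Pf n (lam : 'I_n -> nat) (R : realFieldType) (I : {set 'I_n}) (w : 'rV[int]_(n.+1)) :=
  S lam w /\ (forall i, i \in I -> F R lam (cx i) (embR R w)) /\ Fsigma R lam (embR R w).

Lemma gen_of n (lam : 'I_n -> nat) (w : 'rV[int]_(n.+1)) :
  (forall j, 0 <= w 0 (cx j)) -> w 0 ord_max = 1 -> sigma lam w = 0 -> gen lam w.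
Proof.
move=> h1 h2 h3; right; split => //; split => //.
move/eqP: h3; rewrite /sigma h2 mulr1 subr_eq0 => /eqP ->; exact: lexx.
Qed.

Lemma P_of n (lam : 'I_n -> nat) R (I : {set 'I_n}) (w : 'rV[int]_(n.+1)) :
  gen lam w -> (forall i, i \in I -> w 0 (cx i) = 0) -> sigma lam w = 0 -> Pf lam R I w.
Proof.
move=> hg hI hs.
have hS : S lam w.
  exists [:: w]; split; first by move=> g; rewrite inE => /eqP ->.
  by rewrite big_cons big_nil addr0.
have hpos : pos R lam (embR R w).
  exists [:: (1, w)]; split; first by move=> p; rewrite inE => /eqP -> /=.
  by rewrite big_cons big_nil addr0 scale1r.
split => //; split.
  move=> i hi; split => //; rewrite /H embR_coord hI //.
split => //; rewrite /Hsigma sigma_embR hs //.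
Qed.

Lemma P_sigma n (lam : 'I_n -> nat) R (I : {set 'I_n}) (w : 'rV[int]_(n.+1)) : Pf lam R I w -> sigma lam w = 0.
Proof.
move=> [_ [_ [_ h]]]; move: h; rewrite /Hsigma sigma_embR => /eqP.
by rewrite intr_eq0 => /eqP.
Qed.

Lemma P_H n (lam : 'I_n -> nat) R (I : {set 'I_n}) (w : 'rV[int]_(n.+1)) i :
  Pf lam R I w -> i \in I -> w 0 (cx i) = 0.
Proof.
move=> [_ [h _]] /h [_]; rewrite /H embR_coord => /eqP.
by rewrite intr_eq0 => /eqP.
Qed.

Lemma grp_sigma n (lam : 'I_n -> nat) R (I : {set 'I_n}) (v : 'rV[int]_(n.+1)) :
  grp (Pf lam R I) v -> sigma lam v = 0.
Proof.
move=> [s [hs ->]]; rewrite sigma_sum big_seq big1 // => p /hs /P_sigma ->.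
by rewrite mulr0.
Qed.

Lemma coord_sum n (s : seq (int * 'rV[int]_(n.+1))) j :
  (\sum_(p <- s) p.2 *~ p.1) 0 j = \sum_(p <- s) p.1 * p.2 0 j.
Proof.
elim: s => [|p s IH]; first by rewrite !big_nil mxE.
by rewrite !big_cons mxE IH -scaler_int intz mxE.
Qed.

Lemma grp_H n (lam : 'I_n -> nat) R (I : {set 'I_n}) (v : 'rV[int]_(n.+1)) i :
  grp (Pf lam R I) v -> i \in I -> v 0 (cx i) = 0.
Proof.
move=> [s [hs ->]] hi; rewrite coord_sum big_seq big1 // => p /hs hp.
by rewrite (P_H hp hi) mulr0.
Qed.
Definition gg n (lam : 'I_n -> nat) j k := gcdn (lam j) (lam k).

Definition av n (lam : 'I_n -> nat) j : 'rV[int]_(n.+1) :=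
  \row_(i < n.+1) ((i == cx j)%:R * (lam j)%:R + (i == ord_max)%:R).
Definition bv n (lam : 'I_n -> nat) j k : 'rV[int]_(n.+1) :=
  \row_(i < n.+1) ((i == cx j)%:R * (lam j - lam j %/ gg lam j k)%:R
                   + (i == cx k)%:R * (lam k %/ gg lam j k)%:R + (i == ord_max)%:R).
Definition dv n (lam : 'I_n -> nat) j k : 'rV[int]_(n.+1) := av lam j - bv lam j k.

Lemma coordB n (u w : 'rV[int]_(n.+1)) i : (u - w) 0 i = u 0 i - w 0 i.
Proof. by rewrite !mxE. Qed.
Lemma coordD n (u w : 'rV[int]_(n.+1)) i : (u + w) 0 i = u 0 i + w 0 i.
Proof. by rewrite !mxE. Qed.
Lemma coordZ n (u : 'rV[int]_(n.+1)) z i : (z *: u) 0 i = z * u 0 i.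
Proof. by rewrite !mxE. Qed.

Lemma av_cx n (lam : 'I_n -> nat) j i : av lam j 0 (cx i) = (i == j)%:R * (lam j)%:R.
Proof. by rewrite mxE cx_eq cx_max addr0. Qed.
Lemma av_max n (lam : 'I_n -> nat) j : av lam j 0 ord_max = 1.
Proof. by rewrite mxE eq_sym cx_max mul0r add0r eqxx. Qed.
Lemma bv_cx n (lam : 'I_n -> nat) j k i : bv lam j k 0 (cx i) =
  (i == j)%:R * (lam j - lam j %/ gg lam j k)%:R + (i == k)%:R * (lam k %/ gg lam j k)%:R.
Proof. by rewrite mxE !cx_eq cx_max addr0. Qed.
Lemma bv_max n (lam : 'I_n -> nat) j k : bv lam j k 0 ord_max = 1.
Proof. by rewrite mxE !(eq_sym ord_max) !cx_max !mul0r !add0r eqxx. Qed.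

Lemma dv_cx n (lam : 'I_n -> nat) j k i : dv lam j k 0 (cx i) =
  (i == j)%:R * (lam j %/ gg lam j k)%:R - (i == k)%:R * (lam k %/ gg lam j k)%:R.
Proof.
rewrite /dv coordB av_cx bv_cx natrB ?leq_div //.
set a := (i == j)%:R; set b := _ * (lam k %/ _)%:R; set c := (lam j)%:R; set q := (_ %/ _)%:R.
by rewrite mulrBr opprD opprB addrA [a * c + _]addrC subrK.
Qed.
Lemma dv_max n (lam : 'I_n -> nat) j k : dv lam j k 0 ord_max = 0.
Proof. by rewrite /dv coordB av_max bv_max subrr. Qed.

Lemma sigma_av n (lam : 'I_n -> nat) j : sigma lam (av lam j) = 0.
Proof.
rewrite /sigma av_max mulr1.
under eq_bigr do rewrite av_cx mulrA mulrAC.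
by rewrite sum_ind -natrM omega_lam subrr.
Qed.

Lemma gg_dvdl n (lam : 'I_n -> nat) j k : (gg lam j k %| lam j)%N.
Proof. exact: dvdn_gcdl. Qed.
Lemma gg_dvdr n (lam : 'I_n -> nat) j k : (gg lam j k %| lam k)%N.
Proof. exact: dvdn_gcdr. Qed.

Lemma omega_div n (lam : 'I_n -> nat) j d : (d %| lam j)%N ->
  (omega lam j * (lam j %/ d))%N = (Lcm lam %/ d)%N.
Proof. by move=> h; rewrite muln_divA // omega_lam. Qed.

Lemma sigma_bv n (lam : 'I_n -> nat) j k : sigma lam (bv lam j k) = 0.
Proof.
rewrite /sigma bv_max mulr1.
under eq_bigr do rewrite bv_cx mulrDr mulrA mulrAC [X in _ + X]mulrA [X in _ + X]mulrAC.
rewrite big_split /= !sum_ind -!natrM mulnBr omega_div ?gg_dvdl //.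
by rewrite omega_div ?gg_dvdr // omega_lam -natrD subnK ?leq_div // subrr.
Qed.

Lemma sigma_dv n (lam : 'I_n -> nat) j k : sigma lam (dv lam j k) = 0.
Proof. by rewrite /dv sigmaD -scaleN1r sigmaZ sigma_av sigma_bv mulr0 addr0. Qed.
Lemma av_P n (lam : 'I_n -> nat) R (I : {set 'I_n}) j : j \notin I -> Pf lam R I (av lam j).
Proof.
move=> hj; apply: P_of; last exact: sigma_av.
  apply: gen_of; [|exact: av_max|exact: sigma_av].
  by move=> i; rewrite av_cx mulr_ge0 ?ler0n.
move=> i hi; rewrite av_cx; case: eqP => [e|_]; last by rewrite mul0r.
by move: hj; rewrite -e hi.
Qed.

Lemma bv_P n (lam : 'I_n -> nat) R (I : {set 'I_n}) j k : j \notin I -> k \notin I ->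
  Pf lam R I (bv lam j k).
Proof.
move=> hj hk; apply: P_of; last exact: sigma_bv.
  apply: gen_of; [|exact: bv_max|exact: sigma_bv].
  by move=> i; rewrite bv_cx addr_ge0 ?mulr_ge0 ?ler0n.
move=> i hi; rewrite bv_cx; case: eqP => [e|_]; first by move: hj; rewrite -e hi.
case: eqP => [e|_]; first by move: hk; rewrite -e hi.
by rewrite !mul0r addr0.
Qed.

Lemma dv_grp n (lam : 'I_n -> nat) R (I : {set 'I_n}) j k : j \notin I -> k \notin I ->
  grp (Pf lam R I) (dv lam j k).
Proof.
move=> hj hk; apply: grpB; apply: grp_gen; [exact: av_P|exact: bv_P].
Qed.
Lemma minn_subl e x y : (minn (e - x) (e - y) = e - maxn x y)%N.
Proof.
case: (leqP x y) => h.
  by apply/minn_idPr; rewrite leq_sub2l.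
by apply/minn_idPl; rewrite leq_sub2l // ltnW.
Qed.

Lemma TE l a b : (0 < l)%N -> (0 < a)%N -> (0 < b)%N ->
  gcdn (l %/ gcdn l a) (l %/ gcdn l b) = (l %/ gcdn l (lcmn a b))%N.
Proof.
move=> hl ha hb.
have hq c : (0 < c)%N -> (0 < l %/ gcdn l c)%N.
  by move=> hc; rewrite divn_gt0 ?gcdn_gt0 ?hl // dvdn_leq // dvdn_gcdl.
have hab : (0 < lcmn a b)%N by rewrite lcmn_gt0 ha hb.
apply: eqn_from_log; rewrite ?gcdn_gt0 ?hq // => p.
rewrite logn_gcd ?hq // !logn_div ?dvdn_gcdl // !logn_gcd // logn_lcm //.
by rewrite minn_maxr minn_subl.
Qed.

Lemma claimB l M X : (0 < l)%N -> (l %| M * X)%N -> (l %/ gcdn l M %| X)%N.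
Proof.
move=> hl h.
have hg : (0 < gcdn l M)%N by rewrite gcdn_gt0 hl.
have el : l = (l %/ gcdn l M * gcdn l M)%N by rewrite divnK // dvdn_gcdl.
have eM : M = (M %/ gcdn l M * gcdn l M)%N by rewrite divnK // dvdn_gcdr.
have co : coprime (l %/ gcdn l M) (M %/ gcdn l M).
  rewrite /coprime -(eqn_pmul2r hg) mul1n muln_gcdl -el -eM //.
rewrite -(Gauss_dvdr X co).
have h' : (l %/ gcdn l M * gcdn l M %| M %/ gcdn l M * gcdn l M * X)%N by rewrite -el -eM.
by rewrite mulnAC dvdn_pmul2r in h'.
Qed.
Definition Dg n (lam : 'I_n -> nat) k (T : seq 'I_n) :=
  \big[gcdn/0%N]_(j <- T) (lam k %/ gg lam j k)%N.
Definition Mx n (lam : 'I_n -> nat) (T : seq 'I_n) := \big[lcmn/1%N]_(j <- T) lam j.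

Lemma Mx_gt0 n (lam : 'I_n -> nat) T : (forall i, 0 < lam i)%N -> (0 < Mx lam T)%N.
Proof.
move=> h; rewrite /Mx; elim/big_ind: _ => // x y hx hy.
by rewrite lcmn_gt0 hx hy.
Qed.

Lemma Mx_dvd n (lam : 'I_n -> nat) T j : j \in T -> (lam j %| Mx lam T)%N.
Proof.
rewrite /Mx; elim: T => [|a T IH] //; rewrite inE big_cons => /orP [/eqP ->|/IH h].
  exact: dvdn_lcml.
exact: dvdn_trans h (dvdn_lcmr _ _).
Qed.

Lemma claimC n (lam : 'I_n -> nat) k a T : (forall i, 0 < lam i)%N ->
  (Dg lam k (a :: T) %| lam k %/ gcdn (lam k) (Mx lam (a :: T)))%N.
Proof.
move=> hl; elim: T a => [|b T IH] a.
  by rewrite /Dg /Mx !big_cons !big_nil gcdn0 lcmn1 /gg gcdnC.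
have -> : Dg lam k [:: a, b & T] = gcdn (lam k %/ gg lam a k) (Dg lam k (b :: T)).
  by rewrite /Dg big_cons.
have -> : Mx lam [:: a, b & T] = lcmn (lam a) (Mx lam (b :: T)).
  by rewrite /Mx big_cons.
rewrite -TE ?Mx_gt0 // dvdn_gcd; apply/andP; split.
  by apply: dvdn_trans (dvdn_gcdl _ _) _; rewrite /gg gcdnC.
exact: dvdn_trans (dvdn_gcdr _ _) (IH b).
Qed.
Lemma omega_gt0 n (lam : 'I_n -> nat) k : (forall i, 0 < lam i)%N -> (0 < omega lam k)%N.
Proof.
move=> h; have := L_gt0 h; rewrite -(omega_lam lam k) muln_gt0 => /andP [] //.
Qed.

Lemma NT n (lam : 'I_n -> nat) k (T : seq 'I_n) (x : int) (y : 'I_n -> int) :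
  (forall i, 0 < lam i)%N ->
  (omega lam k)%:R * x + \sum_(j <- T) (omega lam j)%:R * y j = 0 ->
  (Dg lam k T %| `|x|)%N.
Proof.
move=> hl E; case: T E => [|a T] E.
  move: E; rewrite big_nil addr0 => /eqP; rewrite mulf_eq0 pnatr_eq0.
  by rewrite eqn0Ngt omega_gt0 //= => /eqP ->.
set l := lam k; set M := Mx lam (a :: T).
apply: dvdn_trans (claimC k a T hl) _; apply: claimB => //.
have key : (Lcm lam)%:R * (M%:R * x + l%:R * \sum_(j <- a :: T) (M %/ lam j)%:R * y j)
   = ((omega lam k)%:R * x + \sum_(j <- a :: T) (omega lam j)%:R * y j) * (l * M)%:R.
  rewrite mulrDr mulrDl; congr (_ + _).
    by rewrite mulrA [RHS]mulrAC -!natrM mulnA omega_lam.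
  rewrite !mulr_sumr mulr_suml !big_seq; apply: eq_bigr => j hj.
  have e : (Lcm lam * l * (M %/ lam j) = omega lam j * (l * M))%N.
    rewrite -(omega_lam lam j) -!mulnA; congr (_ * _)%N.
    by rewrite mulnCA [(lam j * _)%N]mulnC divnK ?Mx_dvd.
  by rewrite !mulrA -!natrM e [RHS]mulrAC -natrM.
move: key; rewrite E mul0r => /eqP; rewrite mulf_eq0 pnatr_eq0 eqn0Ngt L_gt0 //=.
rewrite addr_eq0 => /eqP hM.
have : (l%:Z %| M%:Z * x)%Z.
  apply/dvdzP; exists (- \sum_(j <- a :: T) (M %/ lam j)%:R * y j).
  by rewrite -!natz hM mulNr mulrC.
by rewrite dvdzE abszM.
Qed.
Lemma bez n (lam : 'I_n -> nat) R (I : {set 'I_n}) k (T : seq 'I_n) :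
  k \notin T -> k \notin I -> (forall j, j \in T -> j \notin I) ->
  forall x : int, (Dg lam k T %| `|x|)%N ->
  exists w, grp (Pf lam R I) w /\ w 0 (cx k) = x /\
    (forall i, i \notin k :: T -> w 0 (cx i) = 0) /\ w 0 ord_max = 0.
Proof.
elim: T => [|a T IH] hkT hkI hTI x hx.
  move: hx; rewrite /Dg big_nil dvd0n absz_eq0 => /eqP ->.
  exists 0; split; first exact: grp0.
  by rewrite !mxE; split => //; split => // i _; rewrite mxE.
move: hkT; rewrite inE negb_or => /andP [hka hkT].
have haI : a \notin I by apply: hTI; rewrite inE eqxx.
have hTI' : forall j, j \in T -> j \notin I by move=> j hj; apply: hTI; rewrite inE hj orbT.
set m := (lam k %/ gg lam a k)%N; set D := Dg lam k T.
have hD : Dg lam k (a :: T) = gcdn m D by rewrite /Dg big_cons.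
have [u [v huv]] := Bezoutz m%:Z D%:Z.
have : (gcdz m%:Z D%:Z %| x)%Z by rewrite dvdzE /= -hD.
move/dvdzP => [q hq].
have hx' : (D %| `|(q * v * D%:Z)%R|)%N by rewrite abszM dvdn_mull.
have [w [hG [hk [hs hm]]]] := IH hkT hkI hTI' _ hx'.
exists (w - (q * u) *: dv lam a k); split; last split; last split.
- by apply: grpB => //; apply: grpZ; apply: dv_grp.
- rewrite coordB coordZ dv_cx eqxx (negbTE hka) hk mul0r mul1r sub0r mulrN opprK.
  by rewrite hq -huv mulrDr !mulrA addrC natz.
- move=> i; rewrite !inE !negb_or => /and3P [hik hia hiT].
  rewrite coordB coordZ dv_cx (negbTE hia) (negbTE hik) !mul0r subrr mulr0 subr0.
  by apply: hs; rewrite inE negb_or hik.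
- by rewrite coordB coordZ dv_max hm mulr0 subrr.
Qed.
Lemma sum_supp n (f : 'I_n -> int) (s : seq 'I_n) : uniq s ->
  (forall i, i \notin s -> f i = 0) -> \sum_(i < n) f i = \sum_(i <- s) f i.
Proof.
move=> hu hf; rewrite (bigID (fun i => i \in s)) /= [X in _ + X]big1 ?addr0.
  by rewrite big_uniq.
by move=> i /hf.
Qed.

Lemma sigmaB n lam (x y : 'rV[int]_(n.+1)) : sigma lam (x - y) = sigma lam x - sigma lam y.
Proof. by rewrite sigmaD -scaleN1r sigmaZ mulN1r. Qed.

Lemma mainT n (lam : 'I_n -> nat) R (I : {set 'I_n}) (T : seq 'I_n) :
  (forall i, 0 < lam i)%N -> uniq T -> (forall j, j \in T -> j \notin I) ->
  forall v : 'rV[int]_(n.+1), (forall i, i \notin T -> v 0 (cx i) = 0) -> v 0 ord_max = 0 ->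
  sigma lam v = 0 -> grp (Pf lam R I) v.
Proof.
move=> hl; elim: T => [|k T IH] hu hTI v hs hm hsig.
  by rewrite (rv_eq0 hm (fun i => hs i isT)); exact: grp0.
move: hu => /= /andP [hkT hu].
have hkI : k \notin I by apply: hTI; rewrite inE eqxx.
have hTI' : forall j, j \in T -> j \notin I by move=> j hj; apply: hTI; rewrite inE hj orbT.
have E : (omega lam k)%:R * v 0 (cx k) + \sum_(j <- T) (omega lam j)%:R * v 0 (cx j) = 0.
  move: hsig; rewrite /sigma hm mulr0 subr0 (@sum_supp _ _ (k :: T)) ?big_cons //=.
    by rewrite hkT.
  by move=> i /hs ->; rewrite mulr0.
have [w [hG [hk [hws hwm]]]] := bez R hkT hkI hTI' (NT hl E).
have -> : v = (v - w) + w by rewrite subrK.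
apply: grpD => //; apply: IH => //.
- move=> i hi; rewrite coordB; case: (eqVneq i k) => [->|hik]; first by rewrite hk subrr.
  by rewrite hs ?hws // inE negb_or ?hik // hi.
- by rewrite coordB hm hwm subrr.
- by rewrite sigmaB hsig (grp_sigma hG) subrr.
Qed.
Theorem mainTheorem12 (n : nat) (lam : 'I_n -> nat) (hlam : forall i, (0 < lam i)%N)
  (R : realFieldType) (I : {set 'I_n}) (hI : I != set0) :
  forall v : 'rV[int]_(n.+1),
    grp (fun w => S lam w /\ (forall i, i \in I -> F R lam (cx i) (embR R w))
                          /\ Fsigma R lam (embR R w)) v
    <-> (grp (S lam) v /\ (forall i, i \in I -> H (cx i) v) /\ Hsigma lam v).
Proof.
move=> v; split.
  move=> hv; split; last split.
  - move: hv => [s [hs ->]]; exists s; split => // p /hs [] //.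
  - by move=> i hi; rewrite /H; exact: (grp_H (R:=R) (I:=I) hv hi).
  - by rewrite /Hsigma; exact: (grp_sigma (R:=R) (I:=I) hv).
move=> [_ [hH hsig]]; rewrite /Hsigma in hsig.
change (grp (Pf lam R I) v).
case: (pickP (fun j => j \notin I)) => [j0 hj0|hall].
  set t := v 0 ord_max.
  have -> : v = (v - t *: av lam j0) + t *: av lam j0 by rewrite subrK.
  apply: grpD; last by apply: grpZ; apply: grp_gen; apply: av_P.
  apply: (@mainT _ _ _ _ [seq j <- enum 'I_n | j \notin I]) => //.
  - by rewrite filter_uniq // enum_uniq.
  - by move=> j; rewrite mem_filter => /andP [].
  - move=> i; rewrite mem_filter mem_enum andbT negbK => hi.
    rewrite coordB coordZ av_cx (hH i hi); case: eqP => [e|_]; last by rewrite mul0r mulr0 subrr.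
    by move: hj0; rewrite -e hi.
  - by rewrite coordB coordZ av_max mulr1 subrr.
  - by rewrite sigmaB sigmaZ sigma_av mulr0 subr0.
have hv : v = 0.
  apply: rv_eq0; last by move=> j; apply: hH; have := hall j; rewrite /= => /negbFE.
  move: hsig; rewrite /sigma big1 ?sub0r.
    move/eqP; rewrite oppr_eq0 mulf_eq0 pnatr_eq0 eqn0Ngt L_gt0 //= => /eqP //.
  by move=> i _; rewrite (hH i) ?mulr0 //; have := hall i; rewrite /= => /negbFE.
by rewrite hv; exact: grp0.
Qed.
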